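(* Let $b>1$, let $(p,R,I)$ be proper with $I$ non-empty, let $k$ be the greatest divisor of $p$ coprime with $b$ and $d=p/k$. Then: (a) for all distinct $x,x'\in\{0,\ldots,k-1\}$, the states $(xd,\bot)$ and $(x'd,\bot)$ of $\mathcal{C}_{R,p,I}$ are not Nerode-equivalent; (b) the states of $\mathcal{C}_{R,p,I}$ that belong to $0$-circuits are pairwise Nerode-inequivalent; (c) the initial state of $\mathcal{C}_{R,p,I}$ is not Nerode-equivalent to any other state.
   Context: $A_b=\{0,\ldots,b-1\}$. Given $p\ge1$, $R\subseteq\{0,\ldots,p-1\}$, finite $I\subseteq\mathbb{N}$, let $S=(R+p\mathbb{N})\oplus I$ ($\oplus$ = symmetric difference). $(p,R,I)$ is proper if $p$ is the smallest positive integer for which $S=(R'+p\mathbb{N})\oplus I'$ for some $R'\subseteq\{0,\ldots,p-1\}$ and finite $I'$. $\mathcal{A}_{R,p}$: states $\{0,\ldots,p-1\}$, initial $0$, final $R$, transitions $n\xrightarrow{a}(nb+a)\bmod p$. With $m=\max I$, $\mathcal{B}_I$: states $\{0,\ldots,m\}\cup\{\bot\}$, initial $0$, final $I$, transitions $i\xrightarrow{a}ib+a$ if $ib+a\le m$, else $i\xrightarrow{a}\bot$, and $\bot\xrightarrow{a}\bot$. $\mathcal{C}_{R,p,I}$ is the accessible part of the product of $\mathcal{A}_{R,p}$ and $\mathcal{B}_I$ (initial state $(0,0)$, componentwise transitions), with $(s,t)$ final iff exactly one of $s\in R$, $t\in I$ holds. Two states are Nerode-equivalent if for every word $u$, the states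 reached from them by reading $u$ are both final or both non-final. A $0$-circuit is a circuit all of whose transitions are labelled $0$. *)

(* Defs.v *)
From mathcomp Require Import all_boot.
Set Implicit Arguments. Unset Strict Implicit. Unset Printing Implicit Defensive.

(* membership in S = (R + pN) (+) I *)
Definition inS (p : nat) (R I : seq nat) (n : nat) : bool :=
  (n %% p \in R) (+) (n \in I).

Definition proper_triple (p : nat) (R I : seq nat) : Prop :=
  0 < p /\ all (fun r => r < p) R /\
  forall (p' : nat) (R' I' : seq nat), 0 < p' -> all (fun r => r < p') R' ->
    (forall n, inS p R I n = inS p' R' I' n) -> p <= p'.

Definition word_over (b : nat) (u : seq nat) : bool := all (fun a => a < b) u.

(* states of the product automaton: (s, t) with t = None standing for bottom *)
Definition state := (nat * option nat)%type.

Definition maxI (I : seq nat) : nat := \max_(i <- I) i.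

Definition stepB (b : nat) (I : seq nat) (t : option nat) (a : nat) : option nat :=
  match t with
  | Some i => if i * b + a <= maxI I then Some (i * b + a) else None
  | None => None
  end.

Definition stepA (b p : nat) (s a : nat) : nat := (s * b + a) %% p.

Definition stepC (b p : nat) (I : seq nat) (q : state) (a : nat) : state :=
  (stepA b p q.1 a, stepB b I q.2 a).

Definition runC (b p : nat) (I : seq nat) (q : state) (u : seq nat) : state :=
  foldl (stepC b p I) q u.

Definition initC : state := (0, Some 0).

Definition finalC (R I : seq nat) (q : state) : bool :=
  (q.1 \in R) (+) (match q.2 with Some i => i \in I | None => false end).

(* q is a state of C_{R,p,I} (accessible part) *)
Definition accessibleC (b p : nat) (I : seq nat) (q : state) : Prop :=
  exists u, word_over b u /\ runC b p I initC u = q.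

Definition nerode_equiv (b p : nat) (R I : seq nat) (q q' : state) : Prop :=
  forall u, word_over b u ->
    finalC R I (runC b p I q u) = finalC R I (runC b p I q' u).

(* q lies on a 0-circuit (a nonempty circuit all of whose labels are 0);
   the automaton being deterministic, this means 0^n leads back to q for some n >= 1 *)
Definition on_zero_circuit (b p : nat) (I : seq nat) (q : state) : Prop :=
  exists n, 0 < n /\ runC b p I q (nseq n 0) = q.

Definition kpart (p b : nat) : nat :=
  \max_(j < p.+1 | (j %| p) && coprime j b) j.

(* Main.v *)
Require Import Defs.
From mathcomp Require Import all_boot zify.
Set Implicit Arguments. Unset Strict Implicit. Unset Printing Implicit Defensive.

Definition valw (b acc : nat) (u : seq nat) : nat := foldl (fun acc a => acc * b + a) acc u.
Definition inR (p : nat) (R : seq nat) (n : nat) : bool := n %% p \in R.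

Lemma valw_cat b acc u w : valw b acc (u ++ w) = valw b (valw b acc u) w.
Proof. by rewrite /valw foldl_cat. Qed.

Lemma valwE b acc u : valw b acc u = acc * b ^ size u + valw b 0 u.
Proof.
elim: u acc => [|a u IH] acc /=; first by rewrite expn0 muln1 addn0.
rewrite IH. rewrite [valw _ _ u in RHS]IH expnS. simpl. rewrite mul0n add0n.
rewrite mulnDl addnA mulnA. lia.
Qed.

Lemma valw_ge b acc u : 0 < b -> acc <= valw b acc u.
Proof.
move=> b0; rewrite valwE; apply: leq_trans (leq_addr _ _).
by apply: leq_pmulr; rewrite expn_gt0 b0.
Qed.

Lemma valw_mod b p acc u : valw b (acc %% p) u %% p = valw b acc u %% p.
Proof. by rewrite valwE [valw b acc u]valwE -modnDml -modnMml modn_mod modnMml modnDml. Qed.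

Lemma valw_zeros b acc c : valw b acc (nseq c 0) = acc * b ^ c.
Proof.
rewrite valwE size_nseq; suff -> : valw b 0 (nseq c 0) = 0 by rewrite addn0.
by elim: c => //= c IH; rewrite mul0n.
Qed.

Lemma runC_cat b p I q u w : runC b p I q (u ++ w) = runC b p I (runC b p I q u) w.
Proof. by rewrite /runC foldl_cat. Qed.

Lemma runC1 b p I q u : 0 < p -> q.1 < p -> (runC b p I q u).1 = valw b q.1 u %% p.
Proof.
move=> p0; elim: u q => [|a u IH] q /= qp; first by rewrite modn_small.
rewrite IH /stepC /stepA /=; last by rewrite ltn_pmod.
by rewrite valw_mod.
Qed.

Lemma runC_none b p I s u : (runC b p I (s, None) u).2 = None.
Proof. by elim: u s => //= a u IH s; rewrite IH. Qed.

Lemma runC_some b p I s i u : 0 < b -> i <= maxI I ->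
  (runC b p I (s, Some i) u).2 =
  if valw b i u <= maxI I then Some (valw b i u) else None.
Proof.
move=> b0; elim: u s i => [|a u IH] s i /= im; first by rewrite im.
rewrite /stepC /=; case: ifP => H.
  by rewrite IH.
rewrite runC_none; case: ifP => // H2.
have := valw_ge (i * b + a) u b0; lia.
Qed.

Lemma mem_maxI I x : x \in I -> x <= maxI I.
Proof. by move=> xI; rewrite /maxI; exact: (leq_bigmax_seq _ xI isT). Qed.

Lemma run_init b p I w : 0 < b -> 0 < p ->
  runC b p I initC w = (valw b 0 w %% p,
     if valw b 0 w <= maxI I then Some (valw b 0 w) else None).
Proof.
move=> b0 p0; rewrite [LHS]surjective_pairing runC1 // runC_some //.
Qed.

Lemma final_init b p R I w : 0 < b -> 0 < p ->
  finalC R I (runC b p I initC w) = inS p R I (valw b 0 w).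
Proof.
move=> b0 p0; rewrite run_init // /finalC /inS /=.
case: ifP => // H; case E: (valw b 0 w \in I) => //.
by move: H; rewrite (mem_maxI E).
Qed.

Lemma final_none b p R I s u : 0 < p -> s < p ->
  finalC R I (runC b p I (s, None) u) = inR p R (valw b s u).
Proof.
move=> p0 sp; rewrite /finalC runC_none runC1 //= /inR.
by rewrite addbF.
Qed.

Fixpoint digits (b n v : nat) : seq nat :=
  match n with 0 => [::] | n'.+1 => rcons (digits b n' (v %/ b)) (v %% b) end.

Lemma digitsP b n v : 0 < b -> v < b ^ n ->
  [/\ word_over b (digits b n v), size (digits b n v) = n & valw b 0 (digits b n v) = v].
Proof.
move=> b0; elim: n v => [|n IH] v /=.
  by rewrite expn0 ltnS leqn0 => /eqP ->.
rewrite expnS => vb.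
have vb' : v %/ b < b ^ n by rewrite ltn_divLR // mulnC.
have [W S V] := IH _ vb'.
split.
- by rewrite /word_over all_rcons ltn_pmod.
- by rewrite size_rcons S.
- by rewrite /valw foldl_rcons -/(valw b 0 _) V -divn_eq.
Qed.

Lemma key p R I L delta : proper_triple p R I ->
  (forall j, j < p -> inR p R (L + j + delta) = inR p R (L + j)) -> p %| delta.
Proof.
move=> [p0 [Rp Hmin]] H.
have inRm : forall n, inR p R (n %% p) = inR p R n by move=> n; rewrite /inR modn_mod.
have inRp : forall n c, inR p R (n + p * c) = inR p R n.
  by move=> n c; rewrite /inR addnC mulnC modnMDl.
have S1 : forall r, inR p R (r + delta) = inR p R r.
  move=> r; set j := (r + (p - L %% p)) %% p.
  have jp : j < p by rewrite ltn_pmod.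
  have E : (L + j) %% p = r %% p.
    rewrite /j modnDmr.
    have LL := divn_eq L p; have Lp := ltn_pmod L p0.
    have -> : L + (r + (p - L %% p)) = r + p * (L %/ p + 1).
      rewrite mulnDr muln1 [p * _]mulnC. lia.
    by rewrite addnC mulnC modnMDl.
  have E2 : (r + delta) %% p = (L + j + delta) %% p by rewrite -modnDml -E modnDml.
  by rewrite /inR E2 -E; exact: H.
have S2 : forall t r, inR p R (r + t * delta) = inR p R r.
  elim=> [|t IH] r; first by rewrite mul0n addn0.
  by rewrite mulSn addnA IH S1.
set g := gcdn delta p.
have g0 : 0 < g by rewrite gcdn_gt0 p0 orbT.
have [a _ Ha] := Bezoutr delta p0.
have S3 : forall r, inR p R (r + g) = inR p R r.
  move=> r; rewrite -(S2 a (r + g)) -addnA.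
  have /dvdnP [c ->] := Ha.
  by rewrite mulnC inRp.
have S4 : forall t r, inR p R (r + t * g) = inR p R r.
  elim=> [|t IH] r; first by rewrite mul0n addn0.
  by rewrite mulSn addnA IH S3.
have S5 : forall n, inR p R n = inR p R (n %% g).
  by move=> n; rewrite {1}(divn_eq n g) addnC S4.
set R' := [seq r <- iota 0 g | inR p R r].
have pg : p <= g.
  apply: (Hmin g R' I g0).
    apply/allP => x; rewrite mem_filter mem_iota => /andP[_ /andP[_]].
    by rewrite add0n.
  move=> n; rewrite /inS mem_filter mem_iota /= add0n ltn_pmod // andbT -S5.
  done.
have gp : g <= p by apply: dvdn_leq p0 (dvdn_gcdr _ _).
have -> : p = g by apply/eqP; rewrite eqn_leq pg gp.
exact: dvdn_gcdl.
Qed.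

Lemma wordP b n v : 0 < b -> v < b ^ n ->
  exists u, [/\ word_over b u, valw b 0 u = v & size u = n].
Proof. by move=> b0 vb; have [W S V] := digitsP b0 vb; exists (digits b n v). Qed.

Lemma nerode_sym b p R I q q' : nerode_equiv b p R I q q' -> nerode_equiv b p R I q' q.
Proof. by move=> H u W; symmetry; apply: H. Qed.

Lemma none_shift b p R I s s' n : proper_triple p R I -> 0 < b -> s < p -> s' < p ->
  s' <= s -> nerode_equiv b p R I (s, None) (s', None) -> p <= b ^ n ->
  p %| (s - s') * b ^ n.
Proof.
move=> pr b0 sp s'p ss' N pb.
have p0 : 0 < p by case: pr.
apply: (key (L := s' * b ^ n) pr) => j jp.
have [u [W V S]] := wordP b0 (leq_trans jp pb).
have := N u W; rewrite !final_none // (valwE b s) (valwE b s') V S => <-.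
have le : s' * b ^ n <= s * b ^ n by rewrite leq_mul2r ss' orbT.
by rewrite mulnBl addnC addnA subnK // addnC.
Qed.

Lemma kpartP p b : 0 < p -> [/\ 0 < kpart p b, kpart p b %| p & coprime (kpart p b) b].
Proof.
move=> p0.
have k1 : 0 < kpart p b.
  have h1 : 1 < p.+1 by rewrite ltnS.
  have := leq_bigmax_cond (P := fun j : 'I_p.+1 => (j %| p) && coprime j b)
           (F := fun j : 'I_p.+1 => nat_of_ord j) (Ordinal h1).
  by rewrite /= dvd1n coprime1n /kpart => /(_ isT).
have : (kpart p b == 0) || ((kpart p b %| p) && coprime (kpart p b) b).
  rewrite /kpart; apply: (big_ind (fun x => (x == 0) || ((x %| p) && coprime x b))) => //.
    move=> x y Hx Hy; case/orP: (leq_total x y) => H;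
      [by rewrite (maxn_idPr H) | by rewrite (maxn_idPl H)].
  by move=> i Hi; rewrite Hi orbT.
by rewrite eqn0Ngt k1 /= => /andP[].
Qed.

Lemma part_a_lt b p R I x x' : 1 < b -> proper_triple p R I ->
  x' < x -> x < kpart p b ->
  ~ nerode_equiv b p R I (x * (p %/ kpart p b), None) (x' * (p %/ kpart p b), None).
Proof.
move=> b1 pr lt xk N.
have p0 : 0 < p by case: pr.
have b0 : 0 < b by apply: ltnW.
have [k0 kp cop] := kpartP b p0.
set k := kpart p b in k0 kp cop xk N *.
set d := p %/ k in N *.
have pE : p = d * k by rewrite /d divnK.
have d0 : 0 < d by move: p0; rewrite pE muln_gt0 => /andP[].
have xp : x * d < p by rewrite pE mulnC ltn_pmul2l.
have x'p : x' * d < p by apply: leq_ltn_trans xp; rewrite leq_mul2r ltnW ?orbT.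
have pb : p <= b ^ p by apply: ltnW; apply: ltn_expl.
have := none_shift pr b0 xp x'p _ N pb.
rewrite leq_mul2r (ltnW lt) orbT => /(_ isT).
rewrite -mulnBl {1}pE mulnAC [_ * d]mulnC dvdn_pmul2l // Gauss_dvdl; last first.
  by apply: coprimeXr.
move/(dvdn_leq); rewrite subn_gt0 lt => /(_ isT); lia.
Qed.

Lemma part_c b p R I q : 1 < b -> proper_triple p R I -> I != [::] ->
  accessibleC b p I q -> q != initC -> ~ nerode_equiv b p R I initC q.
Proof.
move=> b1 pr In [w [Ww Hq]] qn N.
have p0 : 0 < p by case: pr.
have b0 : 0 < b by apply: ltnW.
set Nv := valw b 0 w.
have N0 : 0 < Nv.
  rewrite lt0n; apply/negP => /eqP E; move/eqP: qn; apply.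
  by rewrite -Hq run_init // -/Nv E mod0n.
have H : forall u, word_over b u ->
    inS p R I (valw b 0 u) = inS p R I (Nv * b ^ (size u) + valw b 0 u).
  move=> u W; have := N u W.
  by rewrite -Hq -runC_cat !final_init // valw_cat -/Nv (valwE b Nv).
set m := maxI I.
set n := m.+1 + p.
have bn : n < b ^ n by apply: ltn_expl.
have notI : forall x, m < x -> (x \in I) = false.
  by move=> x mx; apply/negP => /mem_maxI; rewrite -/m; lia.
have bn1 : b ^ n <= Nv * b ^ n by apply: leq_pmull.
have D : p %| Nv * b ^ n.
  apply: (key (L := m.+1) pr) => j jp.
  have [|u [W V S]] := wordP (n := n) (v := m.+1 + j) b0; first by lia.
  have := H u W; rewrite V S /inS !notI ?addbF; try lia.
  by rewrite /inR [m.+1 + j + _]addnC => ->.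
case E: I In => [|x I'] // _.
have xI : x \in I by rewrite E mem_head.
have xm : x <= m by apply: mem_maxI.
have [|u [W V S]] := wordP (n := n) (v := x) b0; first by lia.
have := H u W; rewrite V S /inS xI notI; last by lia.
case/dvdnP: D => c ->; rewrite modnMDl.
by case: (x %% p \in R).
Qed.

Lemma classify b p R I q : 1 < b -> proper_triple p R I ->
  accessibleC b p I q -> on_zero_circuit b p I q ->
  q = initC \/ [/\ q.2 = None, q.1 < p & exists c, 0 < c /\ q.1 * b ^ c %% p = q.1].
Proof.
move=> b1 pr [w [_ Hq]] [c [c0 Hc]].
have p0 : 0 < p by case: pr.
have b0 : 0 < b by apply: ltnW.
move: Hc; rewrite -Hq run_init //; set v := valw b 0 w.
case: ifP => vm Hc.
  have := congr1 snd Hc; rewrite /= runC_some // valw_zeros.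
  case: ifP => _ // [] E.
  have v0 : v = 0.
    apply/eqP; rewrite eqn0Ngt; apply/negP => vp.
    have : v < v * b ^ c by apply: ltn_Pmulr => //; apply: leq_ltn_trans (ltn_expl c b1).
    by rewrite E ltnn.
  by left; rewrite v0 mod0n.
right; split => //; first by rewrite ltn_pmod.
exists c; split => //.
by have := congr1 fst Hc; rewrite /= runC1 //= ?ltn_pmod // valw_zeros.
Qed.

Lemma pow_fix b p s c t : s * b ^ c %% p = s -> s * b ^ (c * t) %% p = s.
Proof.
move=> H; elim: t => [|t IH]; first by rewrite muln0 expn0 muln1 -{1}H modn_mod.
by rewrite mulnS addnC expnD mulnA -modnMml IH H.
Qed.

Lemma none_zero b p R I s s' c c' : 1 < b -> proper_triple p R I -> s' < s -> s < p ->
  0 < c -> 0 < c' -> s * b ^ c %% p = s -> s' * b ^ c' %% p = s' ->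
  ~ nerode_equiv b p R I (s, None) (s', None).
Proof.
move=> b1 pr lt sp c0 c'0 Hs Hs' N.
have p0 : 0 < p by case: pr.
have b0 : 0 < b by apply: ltnW.
set n := c * c' * p.
have E1 : s * b ^ n %% p = s by rewrite /n -mulnA pow_fix.
have E2 : s' * b ^ n %% p = s' by rewrite /n (mulnC c) -mulnA pow_fix.
have pb : p <= b ^ n.
  apply: ltnW; apply: leq_ltn_trans (ltn_expl n b1).
  by rewrite /n leq_pmull // muln_gt0 c0 c'0.
have := none_shift pr b0 sp (ltn_trans lt sp) (ltnW lt) N pb.
rewrite mulnBl -eqn_mod_dvd; last by rewrite leq_mul2r (ltnW lt) orbT.
by rewrite E1 E2 (gtn_eqF lt).
Qed.

Theorem lemma39 (b p : nat) (R I : seq nat) :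
  1 < b -> proper_triple p R I -> I != [::] ->
  let k := kpart p b in
  let d := p %/ k in
  (* (a) *)
  (forall x x', x < k -> x' < k -> x != x' ->
     ~ nerode_equiv b p R I (x * d, None) (x' * d, None)) /\
  (* (b) *)
  (forall q q', accessibleC b p I q -> accessibleC b p I q' ->
     on_zero_circuit b p I q -> on_zero_circuit b p I q' -> q != q' ->
     ~ nerode_equiv b p R I q q') /\
  (* (c) *)
  (forall q, accessibleC b p I q -> q != initC ->
     ~ nerode_equiv b p R I initC q).
Proof.
move=> b1 pr In k d; split; last split.
- move=> x x' xk x'k neq N.
  case: (ltngtP x x') => lt.
  + by apply: (part_a_lt (R := R) (I := I) b1 pr lt x'k); apply: nerode_sym.
  + by apply: (part_a_lt b1 pr lt xk).
  + by rewrite lt eqxx in neq.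
- move=> q q' Aq Aq' Zq Zq' neq N.
  case: (classify b1 pr Aq Zq) => [Eq|[q2 q1 [c [c0 Hc]]]];
  case: (classify b1 pr Aq' Zq') => [Eq'|[q2' q1' [c' [c'0 Hc']]]].
  + by rewrite Eq Eq' eqxx in neq.
  + by apply: (part_c b1 pr In Aq'); [rewrite -Eq eq_sym | rewrite -Eq].
  + by apply: (part_c b1 pr In Aq); [rewrite -Eq' | rewrite -Eq'; apply: nerode_sym].
  + move: q q' Aq Aq' Zq Zq' neq N q2 q1 Hc q2' q1' Hc' => [s t] [s' t'] /= _ _ _ _ neq N E sp Hs E' s'p Hs'; subst t t'.
    case: (ltngtP s s') => lt.
    * by apply: (none_zero b1 pr lt s'p c'0 c0 Hs' Hs); apply: nerode_sym.
    * by apply: (none_zero b1 pr lt sp c0 c'0 Hs Hs').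
    * by rewrite lt eqxx in neq.
- by move=> q Aq neq; apply: part_c.
Qed.
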